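(* Consider the drift-less setting with target $\rho_d=|\Psi\rangle\langle\Psi|$, and suppose $\rho_d$ is not DQLS. Suppose a QL Hamiltonian $H_c$ and QL noise operators $\{D_k\}$, in standard form with respect to $|\Psi\rangle$ ($D_k|\Psi\rangle=0$ for all $k$, $H_c|\Psi\rangle=h|\Psi\rangle$ with $h\in\mathbb R$), make $\rho_d$ GAS for $\mathcal L(H_c,\{D_k\})$. Then $\mathcal H_d=\mathrm{span}\{|\Psi\rangle\}$ is invariant under $H_c$, and there is no nonzero subspace $\mathcal K\subseteq\mathcal H_0$ with $\mathcal K\neq\mathcal H_d$ and $H_c\mathcal K\subseteq\mathcal K$. Moreover, $H_c'=H_c-hI$ is a QL Hamiltonian with $H_c'|\Psi\rangle=0$ and $\rho_d$ is GAS for $\mathcal L(H_c',\{D_k\})$.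
   Context: $\mathcal H=\bigotimes_{a=1}^n\mathcal H_a$ finite-dimensional with neighborhoods $\mathcal N_k\subsetneq\{1,\dots,n\}$. QL operator: $X_{\mathcal N_k}\otimes I_{\bar{\mathcal N}_k}$; QL Hamiltonian: sum of Hermitian QL operators. $\mathcal L(H,\{D_k\})(\rho)=-i[H,\rho]+\sum_k(D_k\rho D_k^\dagger-\frac12\{D_k^\dagger D_k,\rho\})$. GAS: $e^{\mathcal Lt}(\rho_0)\to\rho_d$ for every density operator $\rho_0$. $\rho_d$ is DQLS if there exist QL operators $D_k$ with $D_k|\Psi\rangle=0$ making $\rho_d$ GAS for $\mathcal L(0,\{D_k\})$. With $\rho_{\mathcal N_k}=\mathrm{Tr}_{\bar{\mathcal N}_k}\rho_d$, define $\mathcal H_0=\bigcap_k\mathrm{supp}(\rho_{\mathcal N_k}\otimes I_{\bar{\mathcal N}_k})$. *)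

(* Defs.v *)
From Stdlib Require Import Reals Lra Lia List Arith.
Open Scope R_scope.

Record Cplx := mkC { re : R; im : R }.
Definition Czero : Cplx := mkC 0 0.
Definition Cone : Cplx := mkC 1 0.
Definition Ci : Cplx := mkC 0 1.
Definition RtoC (r : R) : Cplx := mkC r 0.
Definition Cadd (a b : Cplx) : Cplx := mkC (re a + re b) (im a + im b).
Definition Cneg (a : Cplx) : Cplx := mkC (- re a) (- im a).
Definition Csub (a b : Cplx) : Cplx := Cadd a (Cneg b).
Definition Cmul (a b : Cplx) : Cplx :=
  mkC (re a * re b - im a * im b) (re a * im b + im a * re b).
Definition Cconj (a : Cplx) : Cplx := mkC (re a) (- im a).

Fixpoint Csum (n : nat) (f : nat -> Cplx) : Cplx :=
  match n with O => Czero | S m => Cadd (Csum m f) (f m) end.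

(** * Vectors and matrices of dimension D (entries outside [0,D) are ignored) *)
Definition Vec := nat -> Cplx.
Definition Mat := nat -> nat -> Cplx.

Definition veq (D : nat) (x y : Vec) : Prop := forall i, (i < D)%nat -> x i = y i.
Definition meq (D : nat) (A B : Mat) : Prop :=
  forall i j, (i < D)%nat -> (j < D)%nat -> A i j = B i j.

Definition vzero : Vec := fun _ => Czero.
Definition vadd (x y : Vec) : Vec := fun i => Cadd (x i) (y i).
Definition vscale (c : Cplx) (x : Vec) : Vec := fun i => Cmul c (x i).
Definition mv (D : nat) (A : Mat) (x : Vec) : Vec :=
  fun i => Csum D (fun k => Cmul (A i k) (x k)).

Definition mzero : Mat := fun _ _ => Czero.
Definition mid : Mat := fun i j => if Nat.eqb i j then Cone else Czero.
Definition madd (A B : Mat) : Mat := fun i j => Cadd (A i j) (B i j).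
Definition msub (A B : Mat) : Mat := fun i j => Csub (A i j) (B i j).
Definition mscale (c : Cplx) (A : Mat) : Mat := fun i j => Cmul c (A i j).
Definition mmul (D : nat) (A B : Mat) : Mat :=
  fun i j => Csum D (fun k => Cmul (A i k) (B k j)).
Definition adj (A : Mat) : Mat := fun i j => Cconj (A j i).
Definition herm (D : nat) (A : Mat) : Prop := meq D A (adj A).

Definition ketbra (psi : Vec) : Mat := fun i j => Cmul (psi i) (Cconj (psi j)).
Definition inner (D : nat) (x y : Vec) : Cplx := Csum D (fun i => Cmul (Cconj (x i)) (y i)).

Definition psd (D : nat) (A : Mat) : Prop :=
  forall x : Vec, re (inner D x (mv D A x)) >= 0 /\ im (inner D x (mv D A x)) = 0.
Definition trace (D : nat) (A : Mat) : Cplx := Csum D (fun i => A i i).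
Definition density (D : nat) (A : Mat) : Prop := psd D A /\ trace D A = Cone.

Definition dissip (D : nat) (Dk : Mat) (rho : Mat) : Mat :=
  let DD := mmul D (adj Dk) Dk in
  msub (mmul D (mmul D Dk rho) (adj Dk))
       (mscale (RtoC (1/2)) (madd (mmul D DD rho) (mmul D rho DD))).

Definition Lind (D : nat) (H : Mat) (Ds : list Mat) (rho : Mat) : Mat :=
  madd (mscale (Cneg Ci) (msub (mmul D H rho) (mmul D rho H)))
       (fold_right (fun Dk acc => madd (dissip D Dk rho) acc) mzero Ds).

(** * The flow e^{L t} (defined by its exponential series, entrywise) *)
Fixpoint Lpow (L : Mat -> Mat) (k : nat) (rho : Mat) : Mat :=
  match k with O => rho | S k' => L (Lpow L k' rho) end.

Definition expsum (D : nat) (L : Mat -> Mat) (t : R) (rho : Mat) (N : nat) : Mat :=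
  fun i j => Csum (S N) (fun k => Cmul (RtoC (t ^ k / INR (fact k))) (Lpow L k rho i j)).

Definition is_flow (D : nat) (L : Mat -> Mat) (t : R) (rho E : Mat) : Prop :=
  forall i j, (i < D)%nat -> (j < D)%nat ->
    Un_cv (fun N => re (expsum D L t rho N i j)) (re (E i j)) /\
    Un_cv (fun N => im (expsum D L t rho N i j)) (im (E i j)).

Definition cv_at_infty (f : R -> R) (l : R) : Prop :=
  forall eps, eps > 0 -> exists T, forall t, t >= T -> Rabs (f t - l) < eps.

Definition GAS (D : nat) (L : Mat -> Mat) (rhod : Mat) : Prop :=
  forall rho0, density D rho0 ->
  forall E : R -> Mat, (forall t, t >= 0 -> is_flow D L t rho0 (E t)) ->
  forall i j, (i < D)%nat -> (j < D)%nat ->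
    cv_at_infty (fun t => re (E t i j)) (re (rhod i j)) /\
    cv_at_infty (fun t => im (E t i j)) (im (rhod i j)).

(** * Multipartite structure: n subsystems, subsystem a has dimension dims a.
    Total basis index i < Dtot encodes digits in mixed radix. *)
Fixpoint pref (dims : nat -> nat) (a : nat) : nat :=
  match a with O => 1%nat | S b => (pref dims b * dims b)%nat end.
Definition Dtot (n : nat) (dims : nat -> nat) : nat := pref dims n.
Definition digit (dims : nat -> nat) (i a : nat) : nat :=
  Nat.modulo (Nat.div i (pref dims a)) (dims a).

Definition agree_on (n : nat) (dims : nat -> nat) (S : nat -> bool) (i j : nat) : Prop :=
  forall a, (a < n)%nat -> S a = true -> digit dims i a = digit dims j a.

Definition compl (S : nat -> bool) : nat -> bool := fun a => negb (S a).

(** index with the digits of i on N and the digits of j off N *)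
Fixpoint splice_aux (dims : nat -> nat) (N : nat -> bool) (i j : nat) (m : nat) : nat :=
  match m with
  | O => O
  | S a => (splice_aux dims N i j a +
            (if N a then digit dims i a else digit dims j a) * pref dims a)%nat
  end.
Definition splice (n : nat) (dims : nat -> nat) (N : nat -> bool) (i j : nat) : nat :=
  splice_aux dims N i j n.

(** A = X_N (x) I_{complement of N} *)
Definition QL_on (n : nat) (dims : nat -> nat) (N : nat -> bool) (A : Mat) : Prop :=
  let D := Dtot n dims in
  exists X : Mat,
    (forall i j i' j', (i < D)%nat -> (j < D)%nat -> (i' < D)%nat -> (j' < D)%nat ->
       agree_on n dims N i i' -> agree_on n dims N j j' -> X i j = X i' j') /\
    (forall i j, (i < D)%nat -> (j < D)%nat ->
       (agree_on n dims (compl N) i j -> A i j = X i j) /\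
       (~ agree_on n dims (compl N) i j -> A i j = Czero)).

Definition QLop (n : nat) (dims : nat -> nat) (Nb : list (nat -> bool)) (A : Mat) : Prop :=
  exists N, In N Nb /\ QL_on n dims N A.

Definition QLHam (n : nat) (dims : nat -> nat) (Nb : list (nat -> bool)) (H : Mat) : Prop :=
  exists terms : list Mat,
    (forall T, In T terms -> herm (Dtot n dims) T /\ QLop n dims Nb T) /\
    meq (Dtot n dims) H (fold_right madd mzero terms).

Definition proper_nbhds (n : nat) (Nb : list (nat -> bool)) : Prop :=
  forall N, In N Nb ->
    (forall a, N a = true -> (a < n)%nat) /\ (exists a, (a < n)%nat /\ N a = false).

Definition DQLS (n : nat) (dims : nat -> nat) (Nb : list (nat -> bool)) (psi : Vec) : Prop :=
  exists Ds : list Mat,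
    (forall Dk, In Dk Ds -> QLop n dims Nb Dk /\ veq (Dtot n dims) (mv (Dtot n dims) Dk psi) vzero) /\
    GAS (Dtot n dims) (Lind (Dtot n dims) mzero Ds) (ketbra psi).

Fixpoint agreeb_aux (dims : nat -> nat) (S : nat -> bool) (i j : nat) (m : nat) : bool :=
  match m with
  | O => true
  | S a => agreeb_aux dims S i j a &&
           (negb (S a) || Nat.eqb (digit dims i a) (digit dims j a))
  end.
Definition agreeb (n : nat) (dims : nat -> nat) (S : nat -> bool) (i j : nat) : bool :=
  agreeb_aux dims S i j n.

(** (rho_N (x) I)_{ij} with rho_N = Tr_{complement of N} rho:
    zero unless i,j agree off N; otherwise the sum over the configurations k of
    the complement of N of rho_{(i_N,k),(j_N,k)}. The index m ranges over all
    basis indices with m_N = i_N, i.e. m = (i_N,k), and splice N j m = (j_N,k). *)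
Definition red_tens (n : nat) (dims : nat -> nat) (N : nat -> bool) (rho : Mat) : Mat :=
  let D := Dtot n dims in
  fun i j =>
    if agreeb n dims (compl N) i j then
      Csum D (fun m => if agreeb n dims N m i then rho m (splice n dims N j m) else Czero)
    else Czero.

(** H_0 = intersection over k of supp(rho_{N_k} (x) I) (support = range of a PSD operator) *)
Definition inH0 (n : nat) (dims : nat -> nat) (Nb : list (nat -> bool)) (rhod : Mat) (x : Vec) : Prop :=
  forall N, In N Nb -> exists y : Vec,
    veq (Dtot n dims) (mv (Dtot n dims) (red_tens n dims N rhod) y) x.

Definition inspan (D : nat) (psi : Vec) (x : Vec) : Prop :=
  exists c : Cplx, veq D x (vscale c psi).

Definition is_subspace (D : nat) (K : Vec -> Prop) : Prop :=
  (forall x y, veq D x y -> K x -> K y) /\ K vzero /\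
  (forall x y, K x -> K y -> K (vadd x y)) /\
  (forall c x, K x -> K (vscale c x)).

(* Main.v *)
Require Import Defs.
From Stdlib Require Import Reals List Lra Lia Arith Classical Bool Ring.
Open Scope R_scope.

From mathcomp Require ssreflect ssrfun ssrbool eqtype ssrnat seq fintype bigop ssralg ssrnum matrix mxalgebra mxpoly mxred spectral all_boot all_algebra.
From mathcomp Require Rstruct complex.

Module MC.
Import ssreflect ssrfun ssrbool eqtype ssrnat seq choice fintype bigop ssralg ssrnum matrix mxalgebra mxpoly mxred spectral.
Import Rstruct complex.
Import GRing.Theory.
Definition CC := (complex R).
Definition phi (z : Cplx) : CC := Complex (re z) (im z).
Definition psi (z : CC) : Cplx := mkC (Re z) (Im z).

Local Open Scope ring_scope.
Lemma phi_mul a b : phi (Cmul a b) = phi a * phi b.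
Proof. by destruct a as [a1 a2], b as [b1 b2]. Qed.
Lemma phi_add a b : phi (Cadd a b) = phi a + phi b.
Proof. by destruct a as [a1 a2], b as [b1 b2]. Qed.
Lemma phi0 : phi Czero = 0. Proof. by []. Qed.
Lemma phiK z : psi (phi z) = z. Proof. by case: z. Qed.
Lemma psiK z : phi (psi z) = z. Proof. by case: z. Qed.

Lemma phi_sum n f : phi (Csum n f) = \sum_(i < n) phi (f i).
Proof.
elim: n => [|n IH]; first by rewrite big_ord0.
by rewrite big_ord_recr /= phi_add IH.
Qed.

Definition toR (D : nat) (x : Vec) : 'rV[CC]_D := \row_j phi (x j).
Definition fromR (D : nat) (v : 'rV[CC]_D) : Vec :=
  fun i => match (insub i : option 'I_D) with Some k => psi (v ord0 k) | None => Czero end.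
Definition matA (D : nat) (A : Mat) : 'M[CC]_D := \matrix_(i, j) phi (A j i).

Lemma toR_mv D A x : toR D (mv D A x) = toR D x *m matA D A.
Proof.
apply/rowP => j; rewrite !mxE /mv phi_sum.
by apply: eq_bigr => i _; rewrite !mxE phi_mul mulrC.
Qed.

Lemma toR_fromR D v : toR D (fromR D v) = v.
Proof.
apply/rowP => j; rewrite mxE /fromR.
have -> : (insub (val j) : option 'I_D) = Some j by rewrite valK.
by rewrite psiK.
Qed.

Lemma toR_inj D x y : toR D x = toR D y -> veq D x y.
Proof.
move=> /rowP H i Hi; move: (H (Ordinal (introT ltP Hi))); rewrite !mxE => E.
by rewrite -(phiK (x i)) -(phiK (y i)) E.
Qed.

Lemma toR_ext D x y : veq D x y -> toR D x = toR D y.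
Proof. by move=> H; apply/rowP => j; rewrite !mxE H //; apply/ltP. Qed.

Lemma toR_zero D : toR D vzero = 0.
Proof. by apply/rowP => j; rewrite !mxE. Qed.
Lemma toR_vadd D x y : toR D (vadd x y) = toR D x + toR D y.
Proof. by apply/rowP => j; rewrite !mxE phi_add. Qed.
Lemma toR_vscale D c x : toR D (vscale c x) = phi c *: toR D x.
Proof. by apply/rowP => j; rewrite !mxE phi_mul. Qed.

Lemma subspace_mx (F : fieldType) (D : nat) (P : 'rV[F]_D -> Prop) :
  P 0 -> (forall u v, P u -> P v -> P (u + v)) -> (forall a u, P u -> P (a *: u)) ->
  exists M : 'M[F]_D, forall v, (v <= M)%MS <-> P v.
Proof.
move=> P0 PD PZ.
suff H : forall k (M : 'M[F]_D), (forall v, (v <= M)%MS -> P v) -> (D - \rank M <= k)%nat ->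
  exists M' : 'M[F]_D, forall v, (v <= M')%MS <-> P v.
  apply: (H D 0) => [v|]; last by rewrite leq_subr.
  by rewrite submx0 => /eqP ->.
elim=> [|k IH] M HM Hk.
- exists M => v; split; first exact: HM.
  move=> Pv; apply: NNPP => nv.
  have lt : (M < M + v)%MS.
    rewrite ltmxE addsmxSl /=; apply/negP => h; apply: nv; exact: submx_trans (addsmxSr M v) h.
  move: (rank_leq_col (M + v)%MS) => h1; move: lt; rewrite ltmxErank => /andP[_ h2].
  move: Hk; rewrite leqn0 subn_eq0 => h3.
  by move: (leq_trans h2 (leq_trans h1 h3)); rewrite ltnn.
- case: (classic (forall v, P v -> (v <= M)%MS)) => [Hall|].
      by exists M => v; split=> [/HM|/Hall].
  move=> Hn; have [v Hv] := not_all_ex_not _ _ Hn; have [Pv nv] := imply_to_and _ _ Hv.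
  apply: (IH (M + v)%MS).
    move=> w /sub_addsmxP [[u1 u2] /= ->]; apply: PD.
      by apply: HM; apply: submxMl.
    have : (u2 *m v <= v)%MS by apply: submxMl.
    by move=> /sub_rVP [a ->]; apply: PZ.
  have lt : (M < M + v)%MS.
    rewrite ltmxE addsmxSl /=; apply/negP => h; apply: nv; exact: submx_trans (addsmxSr M v) h.
  move: (rank_leq_col (M + v)%MS) => h1; move: lt; rewrite ltmxErank => /andP[_ h2].
  move: Hk; rewrite leq_subLR => Hk; rewrite leq_subLR.
  by apply: (leq_trans Hk); rewrite addnS -addSn leq_add2r.
Qed.

Lemma stable_eigen (C : numClosedFieldType) (D : nat) (M A : 'M[C]_D) :
  M != 0 -> (M *m A <= M)%MS ->
  exists v : 'rV_D, [/\ (v <= M)%MS, v != 0 & exists b, v *m A = b *: v].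
Proof.
move=> Mn0 sMA.
have rpos : (0 < \rank M)%nat by rewrite lt0n mxrank_eq0.
have [a /eigenvalueP [w Hw wn0]] := eigenvalue_closed (restrictmx M A) rpos.
have sw : stablemx w (restrictmx M A) by rewrite Hw scalemx_sub.
rewrite stablemx_restrict // in sw.
exists (w *m row_base M); split.
- by rewrite mulmx_sub // eq_row_base.
- by rewrite mulmx_free_eq0 ?row_base_free.
- by move/sub_rVP: sw.
Qed.

Lemma eig_exists (D : nat) (A : Mat) (P : Vec -> Prop) :
  (forall x y, veq D x y -> P x -> P y) -> P vzero ->
  (forall x y, P x -> P y -> P (vadd x y)) -> (forall c x, P x -> P (vscale c x)) ->
  (exists x, P x /\ ~ veq D x vzero) -> (forall x, P x -> P (mv D A x)) ->
  exists v c, P v /\ ~ veq D v vzero /\ veq D (mv D A v) (vscale c v).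
Proof.
move=> Pext P0 PD PZ [x [Px xn0]] PA.
have back : forall y, P y -> P (fromR D (toR D y)).
  move=> y Py; apply: (Pext y) => //; apply: toR_inj; by rewrite toR_fromR.
have [M HM] : exists M : 'M[CC]_D, forall v, (v <= M)%MS <-> P (fromR D v).
  apply: subspace_mx.
  - apply: (Pext vzero) => //; apply: toR_inj; by rewrite toR_fromR toR_zero.
  - move=> u v Pu Pv; apply: (Pext (vadd (fromR D u) (fromR D v))); last exact: PD.
    by apply: toR_inj; rewrite toR_fromR toR_vadd !toR_fromR.
  - move=> a u Pu; apply: (Pext (vscale (psi a) (fromR D u))); last exact: PZ.
    by apply: toR_inj; rewrite toR_fromR toR_vscale !toR_fromR psiK.
have Mn0 : M != 0.
  apply/negP => /eqP M0; apply: xn0; apply: toR_inj; rewrite toR_zero.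
  have : (toR D x <= M)%MS by apply/HM; apply: back.
  by rewrite M0 submx0 => /eqP.
have sMA : (M *m matA D A <= M)%MS.
  apply/row_subP => i; rewrite row_mul; apply/HM.
  have := PA _ (proj1 (HM _) (row_sub i M)) => /back.
  by rewrite toR_mv toR_fromR.
have [v [vM vn0 [b Hb]]] := stable_eigen _ _ _ _ Mn0 sMA.
exists (fromR D v), (psi b); split; [exact/HM | split].
- move=> /toR_ext; rewrite toR_fromR toR_zero => E; by move/eqP: vn0.
- by apply: toR_inj; rewrite toR_mv toR_vscale toR_fromR psiK.
Qed.

End MC.


Lemma Ceq (a b : Cplx) : re a = re b -> im a = im b -> a = b.
Proof. destruct a, b; simpl; intros; subst; reflexivity. Qed.

Lemma Cring : ring_theory Czero Cone Cadd Cmul Csub Cneg (@eq Cplx).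
Proof.
  constructor; intros; apply Ceq; destruct x; try destruct y; try destruct z; simpl; ring.
Qed.
Add Ring CRing : Cring.

Lemma Cconj_mul a b : Cconj (Cmul a b) = Cmul (Cconj a) (Cconj b).
Proof. apply Ceq; destruct a, b; simpl; ring. Qed.
Lemma Cconj_add a b : Cconj (Cadd a b) = Cadd (Cconj a) (Cconj b).
Proof. apply Ceq; destruct a, b; simpl; ring. Qed.
Lemma Cconj_conj a : Cconj (Cconj a) = a.
Proof. apply Ceq; destruct a; simpl; ring. Qed.
Lemma Cconj_zero : Cconj Czero = Czero.
Proof. apply Ceq; simpl; ring. Qed.

Lemma Csum_ext n f g : (forall i, (i < n)%nat -> f i = g i) -> Csum n f = Csum n g.
Proof. induction n; simpl; intros H; auto. rewrite IHn, H; auto. Qed.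
Lemma Csum_add n f g : Csum n (fun i => Cadd (f i) (g i)) = Cadd (Csum n f) (Csum n g).
Proof. induction n; simpl. apply Ceq; simpl; ring. rewrite IHn; ring. Qed.
Lemma Csum_mulr n c f : Csum n (fun i => Cmul c (f i)) = Cmul c (Csum n f).
Proof. induction n; simpl. apply Ceq; simpl; ring. rewrite IHn; ring. Qed.
Lemma Csum_zero n f : (forall i, (i < n)%nat -> f i = Czero) -> Csum n f = Czero.
Proof. intros H; rewrite (Csum_ext n f (fun _ => Czero)) by auto. induction n; simpl; auto. rewrite IHn; [ring|auto]. Qed.
Lemma Csum_swap n m f : Csum n (fun i => Csum m (fun j => f i j)) = Csum m (fun j => Csum n (fun i => f i j)).
Proof.
  induction n; simpl.
  - symmetry; apply Csum_zero; auto.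
  - rewrite IHn, <- Csum_add; reflexivity.
Qed.
Lemma Csum_unique n f s : (s < n)%nat -> (forall i, (i < n)%nat -> i <> s -> f i = Czero) -> Csum n f = f s.
Proof.
  induction n; intros Hs H; [lia|]. simpl.
  destruct (Nat.eq_dec s n) as [->|Hne].
  - rewrite Csum_zero. ring. intros i Hi; apply H; lia.
  - rewrite IHn by (try lia; intros; apply H; lia). rewrite (H n) by lia. ring.
Qed.
Lemma Cconj_sum n f : Cconj (Csum n f) = Csum n (fun i => Cconj (f i)).
Proof. induction n; simpl. apply Ceq; simpl; ring. rewrite Cconj_add, IHn; auto. Qed.


Section Idx.
Variable n : nat.
Variable dims : nat -> nat.
Hypothesis Hd : forall a, (a < n)%nat -> (1 <= dims a)%nat.

Lemma pref_pos a : (a <= n)%nat -> (0 < pref dims a)%nat.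
Proof. induction a; simpl; intros; [lia|]. specialize (Hd a ltac:(lia)). specialize (IHa ltac:(lia)). nia. Qed.

Lemma mod_step x a : (a < n)%nat ->
  x mod pref dims (S a) = (x mod pref dims a + pref dims a * digit dims x a)%nat.
Proof.
  intros Ha. cbn [pref]. unfold digit. apply Nat.Div0.mod_mul_r.
Qed.

Lemma digit_lt x a : (a < n)%nat -> (digit dims x a < dims a)%nat.
Proof. intros Ha; unfold digit; apply Nat.mod_upper_bound; pose proof (Hd a Ha); lia. Qed.

Lemma digits_eq x y : (x < pref dims n)%nat -> (y < pref dims n)%nat ->
  (forall a, (a < n)%nat -> digit dims x a = digit dims y a) -> x = y.
Proof.
  intros Hx Hy H.
  assert (forall a, (a <= n)%nat -> x mod pref dims a = y mod pref dims a) as K.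
  { induction a; intros Ha.
    - cbn [pref]. rewrite !Nat.mod_1_r; auto.
    - rewrite !mod_step by lia. rewrite IHa, H by lia. reflexivity. }
  specialize (K n (le_n n)). rewrite !Nat.mod_small in K; auto.
Qed.

Fixpoint numf (f : nat -> nat) (m : nat) : nat :=
  match m with O => O | S a => (numf f a + f a * pref dims a)%nat end.

Lemma numf_lt f m : (m <= n)%nat -> (forall a, (a < m)%nat -> (f a < dims a)%nat) ->
  (numf f m < pref dims m)%nat.
Proof.
  induction m; simpl; intros Hm Hf; [lia|].
  specialize (IHm ltac:(lia) ltac:(intros; apply Hf; lia)).
  specialize (Hf m ltac:(lia)). nia.
Qed.

Lemma pref_div a b : (a <= b)%nat -> exists r, pref dims b = (pref dims a * r)%nat.
Proof.
  induction 1. exists 1%nat; lia.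
  destruct IHle as [r Hr]. exists (r * dims m)%nat. simpl. rewrite Hr. lia.
Qed.

Lemma numf_decomp f m a : (a <= m)%nat -> exists q, numf f m = (numf f a + pref dims a * q)%nat.
Proof.
  induction 1. exists 0%nat; lia.
  destruct IHle as [q Hq]. destruct (pref_div a m H) as [r Hr].
  exists (q + f m * r)%nat. simpl. rewrite Hq, Hr. nia.
Qed.

Lemma numf_digit f m a : (m <= n)%nat -> (forall b, (b < m)%nat -> (f b < dims b)%nat) ->
  (a < m)%nat -> digit dims (numf f m) a = f a.
Proof.
  intros Hm Hf Ha.
  pose proof (mod_step (numf f m) a ltac:(lia)) as E.
  assert (M : forall c, (c <= m)%nat -> numf f m mod pref dims c = numf f c).
  { intros c Hc. destruct (numf_decomp f m c Hc) as [q Hq]. rewrite Hq.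
    rewrite Nat.mul_comm, Nat.Div0.mod_add. apply Nat.mod_small. apply numf_lt; auto.
    lia. intros; apply Hf; lia. }
  rewrite !M in E by lia. simpl in E.
  pose proof (pref_pos a ltac:(lia)). nia.
Qed.

Lemma splice_numf N i j m :
  splice_aux dims N i j m = numf (fun a => if N a then digit dims i a else digit dims j a) m.
Proof. induction m; simpl; auto. Qed.

Lemma splice_lt N i j : (splice n dims N i j < Dtot n dims)%nat.
Proof.
  unfold splice, Dtot. rewrite splice_numf. apply numf_lt; auto.
  intros a Ha; destruct (N a); apply digit_lt; auto.
Qed.

Lemma splice_digit N i j a : (a < n)%nat ->
  digit dims (splice n dims N i j) a = if N a then digit dims i a else digit dims j a.
Proof.
  intros Ha. unfold splice. rewrite splice_numf. apply numf_digit; auto.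
  intros b Hb; destruct (N b); apply digit_lt; auto.
Qed.

Lemma agreeb_iff S i j : agreeb n dims S i j = true <-> agree_on n dims S i j.
Proof.
  unfold agreeb, agree_on.
  assert (forall m, agreeb_aux dims S i j m = true <->
            (forall a, (a < m)%nat -> S a = true -> digit dims i a = digit dims j a)) as K.
  { induction m; simpl.
    - split; auto; intros; lia.
    - rewrite andb_true_iff, orb_true_iff, negb_true_iff, Nat.eqb_eq, IHm.
      split.
      + intros [H1 H2] a Ha Sa. destruct (Nat.eq_dec a m) as [->|].
        * destruct H2; congruence.
        * apply H1; auto; lia.
      + intros H; split. intros; apply H; auto; lia.
        destruct (S m) eqn:E; [right; apply H; auto | left; auto]. }
  apply K.
Qed.

Lemma splice_char N a b l : (l < Dtot n dims)%nat ->
  (l = splice n dims N a b <-> agree_on n dims N l a /\ agree_on n dims (compl N) l b).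
Proof.
  intros Hl; split.
  - intros ->; split; intros c Hc Nc; rewrite splice_digit by auto.
    + rewrite Nc; auto.
    + unfold compl in Nc. destruct (N c); simpl in Nc; [discriminate|auto].
  - intros [H1 H2]. apply digits_eq; auto. apply splice_lt.
    intros c Hc. rewrite splice_digit by auto. destruct (N c) eqn:E.
    + apply H1; auto.
    + apply H2; auto. unfold compl; rewrite E; auto.
Qed.

Lemma splice_congr N j m m' : agree_on n dims (compl N) m m' ->
  splice n dims N j m = splice n dims N j m'.
Proof.
  intros H. unfold splice.
  assert (forall k, (k <= n)%nat -> splice_aux dims N j m k = splice_aux dims N j m' k) as K.
  { induction k; simpl; intros; auto. rewrite IHk by lia.
    destruct (N k) eqn:E; auto. rewrite (H k); [auto | lia | unfold compl; rewrite E; auto]. }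
  apply K; lia.
Qed.

Lemma idx_eq_iff N i j : (i < Dtot n dims)%nat -> (j < Dtot n dims)%nat ->
  (i = j <-> agree_on n dims N i j /\ agree_on n dims (compl N) i j).
Proof.
  intros Hi Hj; split.
  - intros ->; split; intros c _ _; auto.
  - intros [H1 H2]. apply digits_eq; auto. intros c Hc.
    destruct (N c) eqn:E; [apply H1; auto | apply H2; auto; unfold compl; rewrite E; auto].
Qed.

End Idx.


Lemma agree_sym n dims S x y : agree_on n dims S x y -> agree_on n dims S y x.
Proof. intros H a Ha Sa; symmetry; auto. Qed.
Lemma agree_trans n dims S x y z : agree_on n dims S x y -> agree_on n dims S y z -> agree_on n dims S x z.
Proof. intros H1 H2 a Ha Sa; rewrite H1; auto. Qed.
Lemma agree_refl n dims S x : agree_on n dims S x x.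
Proof. intros a _ _; auto. Qed.

Lemma agreeb_congr n dims S x x' y : agree_on n dims S x x' ->
  agreeb n dims S x y = agreeb n dims S x' y.
Proof.
  intros H. destruct (agreeb n dims S x y) eqn:E1, (agreeb n dims S x' y) eqn:E2; auto.
  - apply agreeb_iff in E1. assert (agreeb n dims S x' y = true) as F; [|congruence].
    apply agreeb_iff. eapply agree_trans; [apply agree_sym, H | exact E1].
  - apply agreeb_iff in E2. assert (agreeb n dims S x y = true) as F; [|congruence].
    apply agreeb_iff. eapply agree_trans; [exact H | exact E2].
Qed.

Lemma QL_entry n dims N A X i l :
  (forall i j, (i < Dtot n dims)%nat -> (j < Dtot n dims)%nat ->
       (agree_on n dims (compl N) i j -> A i j = X i j) /\
       (~ agree_on n dims (compl N) i j -> A i j = Czero)) ->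
  (i < Dtot n dims)%nat -> (l < Dtot n dims)%nat ->
  A i l = if agreeb n dims (compl N) i l then X i l else Czero.
Proof.
  intros H Hi Hl. destruct (agreeb n dims (compl N) i l) eqn:E.
  - apply agreeb_iff in E. apply (H i l Hi Hl); auto.
  - apply (H i l Hi Hl). intros F. apply agreeb_iff in F. congruence.
Qed.

Lemma ptrace n dims N Dk psi :
  (forall a, (a < n)%nat -> (1 <= dims a)%nat) ->
  QL_on n dims N Dk ->
  veq (Dtot n dims) (mv (Dtot n dims) Dk psi) vzero ->
  forall i j, (i < Dtot n dims)%nat -> (j < Dtot n dims)%nat ->
  mmul (Dtot n dims) Dk (red_tens n dims N (ketbra psi)) i j = Czero.
Proof.
  intros Hd [X [HX HA]] Hpsi i j Hi Hj.
  set (D := Dtot n dims) in *.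
  assert (Ent : forall a b, (a < D)%nat -> (b < D)%nat ->
            Dk a b = if agreeb n dims (compl N) a b then X a b else Czero)
    by (intros; eapply QL_entry; eauto).
  set (T := fun l m => if agreeb n dims (compl N) l j then
              if agreeb n dims N m l then Cmul (Dk i l) (ketbra psi m (splice n dims N j m))
              else Czero else Czero).
  unfold mmul.
  rewrite (Csum_ext _ _ (fun l => Csum D (fun m => T l m))).
  2:{ intros l Hl. unfold red_tens, T. fold D.
      destruct (agreeb n dims (compl N) l j).
      - rewrite <- Csum_mulr. apply Csum_ext. intros m Hm.
        destruct (agreeb n dims N m l); ring.
      - rewrite Csum_zero; auto. ring. }
  rewrite Csum_swap.
  rewrite (Csum_ext _ _ (fun m => if agreeb n dims (compl N) i j then
              Cmul (X i m) (ketbra psi m (splice n dims N j m)) else Czero)).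
  2:{ intros m Hm.
      assert (Hs : (splice n dims N m i < D)%nat) by apply splice_lt, Hd.
      assert (Hch := splice_char n dims Hd N m i (splice n dims N m i) Hs).
      destruct (proj1 Hch eq_refl) as [Hs1 Hs2].
      rewrite (Csum_unique _ _ (splice n dims N m i)); auto.
      - unfold T. rewrite (agreeb_congr n dims (compl N) _ i j) by exact Hs2.
        destruct (agreeb n dims (compl N) i j); auto.
        assert (agreeb n dims N m (splice n dims N m i) = true) as E
          by (apply agreeb_iff, agree_sym, Hs1). rewrite E.
        rewrite Ent by auto.
        assert (agreeb n dims (compl N) i (splice n dims N m i) = true) as E2
          by (apply agreeb_iff, agree_sym, Hs2). rewrite E2.
        rewrite (HX i (splice n dims N m i) i m); auto using agree_refl.
      - intros l Hl Hne. unfold T.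
        destruct (agreeb n dims (compl N) l j); auto.
        destruct (agreeb n dims N m l) eqn:E1; auto.
        rewrite Ent by auto.
        destruct (agreeb n dims (compl N) i l) eqn:E3; [|ring].
        exfalso; apply Hne. apply (splice_char n dims Hd N m i l Hl).
        split; apply agree_sym; apply agreeb_iff; auto. }
  destruct (agreeb n dims (compl N) i j) eqn:Eij; [|apply Csum_zero; auto].
  set (U := fun i' m => if Nat.eqb i' (splice n dims N i m) then
              Cmul (X i' m) (ketbra psi m (splice n dims N j i')) else Czero).
  rewrite (Csum_ext _ _ (fun m => Csum D (fun i' => U i' m))).
  2:{ intros m Hm.
      assert (Hs : (splice n dims N i m < D)%nat) by apply splice_lt, Hd.
      destruct (proj1 (splice_char n dims Hd N i m _ Hs) eq_refl) as [Hs1 Hs2].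
      rewrite (Csum_unique _ _ (splice n dims N i m)); auto.
      - unfold U. rewrite Nat.eqb_refl.
        rewrite (HX (splice n dims N i m) m i m); auto using agree_refl.
        rewrite (splice_congr n dims N j (splice n dims N i m) m); auto.
      - intros l Hl Hne. unfold U. apply Nat.eqb_neq in Hne. rewrite Hne. auto. }
  rewrite Csum_swap. apply Csum_zero. intros i' Hi'.
  destruct (agreeb n dims N i' i) eqn:Ei.
  - rewrite (Csum_ext _ _ (fun m => Cmul (Cconj (psi (splice n dims N j i'))) (Cmul (Dk i' m) (psi m)))).
    + rewrite Csum_mulr. fold (mv D Dk psi i'). rewrite Hpsi by auto. unfold vzero. ring.
    + intros m Hm. unfold U, ketbra. rewrite Ent by auto.
      destruct (Nat.eqb i' (splice n dims N i m)) eqn:E.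
      * apply Nat.eqb_eq in E. apply (splice_char n dims Hd N i m i' Hi') in E as [_ E].
        apply agreeb_iff in E. rewrite E. ring.
      * destruct (agreeb n dims (compl N) i' m) eqn:E2; [|ring].
        exfalso. apply Nat.eqb_neq in E. apply E. apply (splice_char n dims Hd N i m i' Hi').
        split; apply agreeb_iff; auto.
  - apply Csum_zero. intros m Hm. unfold U.
    destruct (Nat.eqb i' (splice n dims N i m)) eqn:E; auto.
    apply Nat.eqb_eq in E. apply (splice_char n dims Hd N i m i' Hi') in E as [E _].
    apply agreeb_iff in E. congruence.
Qed.


Lemma Csum_mull n c f : Csum n (fun i => Cmul (f i) c) = Cmul (Csum n f) c.
Proof. rewrite <- (Csum_ext n (fun i => Cmul c (f i))) by (intros; ring). rewrite Csum_mulr; ring. Qed.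

Section M.
Variable D : nat.

Lemma mv_veq A x x' : veq D x x' -> forall i, mv D A x i = mv D A x' i.
Proof. intros H i; unfold mv; apply Csum_ext; intros k Hk; rewrite H; auto. Qed.
Lemma mv_meq A A' x : meq D A A' -> forall i, (i < D)%nat -> mv D A x i = mv D A' x i.
Proof. intros H i Hi; unfold mv; apply Csum_ext; intros k Hk; rewrite H; auto. Qed.
Lemma mv_scale A c x i : mv D A (vscale c x) i = Cmul c (mv D A x i).
Proof. unfold mv, vscale. rewrite <- Csum_mulr. apply Csum_ext; intros; ring. Qed.
Lemma mv_add A x y i : mv D A (vadd x y) i = Cadd (mv D A x i) (mv D A y i).
Proof. unfold mv, vadd. rewrite <- Csum_add. apply Csum_ext; intros; ring. Qed.
Lemma mv_mmul A B x i : mv D (mmul D A B) x i = mv D A (mv D B x) i.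
Proof.
  unfold mv, mmul.
  rewrite (Csum_ext _ _ (fun k => Csum D (fun l => Cmul (A i l) (Cmul (B l k) (x k))))).
  2:{ intros k _. rewrite <- Csum_mull. apply Csum_ext; intros; ring. }
  rewrite Csum_swap. apply Csum_ext; intros l _. rewrite Csum_mulr. reflexivity.
Qed.

Lemma inner_veq x x' y y' : veq D x x' -> veq D y y' -> inner D x y = inner D x' y'.
Proof. intros H1 H2; unfold inner; apply Csum_ext; intros; rewrite H1, H2; auto. Qed.
Lemma inner_scale x c y : inner D x (vscale c y) = Cmul c (inner D x y).
Proof. unfold inner, vscale. rewrite <- Csum_mulr. apply Csum_ext; intros; ring. Qed.
Lemma inner_add x y z : inner D x (vadd y z) = Cadd (inner D x y) (inner D x z).
Proof. unfold inner, vadd. rewrite <- Csum_add. apply Csum_ext; intros; ring. Qed.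
Lemma inner_zero x : inner D x vzero = Czero.
Proof. unfold inner, vzero. apply Csum_zero; intros; ring. Qed.
Lemma inner_conj x y : inner D x y = Cconj (inner D y x).
Proof.
  unfold inner. rewrite Cconj_sum. apply Csum_ext; intros.
  rewrite Cconj_mul, Cconj_conj. ring.
Qed.

Lemma herm_inner A x y : herm D A -> inner D x (mv D A y) = Cconj (inner D y (mv D A x)).
Proof.
  intros H. unfold inner, mv. rewrite Cconj_sum.
  rewrite (Csum_ext _ (fun i => Cmul (Cconj (x i)) (Csum D (fun k => Cmul (A i k) (y k))))
             (fun i => Csum D (fun k => Cmul (Cconj (x i)) (Cmul (A i k) (y k))))).
  2:{ intros; rewrite Csum_mulr; auto. }
  rewrite Csum_swap. apply Csum_ext; intros k Hk.
  rewrite Cconj_mul, Cconj_sum, Cconj_conj, <- Csum_mulr. apply Csum_ext; intros i Hi.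
  rewrite Cconj_mul. rewrite (H i k) by auto. unfold adj. ring.
Qed.

Lemma herm_fold terms : (forall T, In T terms -> herm D T) -> herm D (fold_right madd mzero terms).
Proof.
  induction terms; simpl; intros H i j Hi Hj.
  - unfold mzero, adj. apply Ceq; simpl; ring.
  - set (F := fold_right madd mzero terms).
    assert (HF : herm D F) by (apply IHterms; auto).
    change (Cadd (a i j) (F i j) = Cconj (Cadd (a j i) (F j i))).
    rewrite (H a (or_introl eq_refl) i j Hi Hj), (HF i j Hi Hj). unfold adj.
    rewrite Cconj_add; auto.
Qed.

Lemma herm_meq A B : meq D A B -> herm D B -> herm D A.
Proof. intros H1 H2 i j Hi Hj. rewrite H1, H2 by auto. unfold adj. rewrite H1 by auto. auto. Qed.

Lemma mmul_meq A A' B B' : meq D A A' -> meq D B B' -> meq D (mmul D A B) (mmul D A' B').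
Proof. intros H1 H2 i j Hi Hj; unfold mmul; apply Csum_ext; intros; rewrite H1, H2; auto. Qed.
Lemma adj_meq A A' : meq D A A' -> meq D (adj A) (adj A').
Proof. intros H i j Hi Hj; unfold adj; rewrite H; auto. Qed.

Lemma meq_refl A : meq D A A.
Proof. intros i j _ _; auto. Qed.
Lemma madd_meq A A' B B' : meq D A A' -> meq D B B' -> meq D (madd A B) (madd A' B').
Proof. intros H1 H2 i j Hi Hj; unfold madd; rewrite H1, H2; auto. Qed.
Lemma msub_meq A A' B B' : meq D A A' -> meq D B B' -> meq D (msub A B) (msub A' B').
Proof. intros H1 H2 i j Hi Hj; unfold msub; rewrite H1, H2; auto. Qed.
Lemma mscale_meq c A A' : meq D A A' -> meq D (mscale c A) (mscale c A').
Proof. intros H1 i j Hi Hj; unfold mscale; rewrite H1; auto. Qed.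

Lemma dissip_meq Dk r r' : meq D r r' -> meq D (dissip D Dk r) (dissip D Dk r').
Proof.
  intros H. unfold dissip. apply msub_meq.
  - apply mmul_meq; [apply mmul_meq|]; auto using meq_refl.
  - apply mscale_meq, madd_meq; apply mmul_meq; auto using meq_refl.
Qed.

Lemma Lind_meq H Ds r r' : meq D r r' -> meq D (Lind D H Ds r) (Lind D H Ds r').
Proof.
  intros Hr. unfold Lind. apply madd_meq.
  - apply mscale_meq, msub_meq; apply mmul_meq; auto using meq_refl.
  - induction Ds; simpl. apply meq_refl. apply madd_meq; auto. apply dissip_meq; auto.
Qed.

Lemma mmul_zero_r A : meq D (mmul D A mzero) mzero.
Proof. intros i j _ _. unfold mmul, mzero. apply Csum_zero; intros; ring. Qed.
Lemma mmul_zero_l A : meq D (mmul D mzero A) mzero.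
Proof. intros i j _ _. unfold mmul, mzero. apply Csum_zero; intros; ring. Qed.

Lemma meq_trans A B C : meq D A B -> meq D B C -> meq D A C.
Proof. intros H1 H2 i j Hi Hj; rewrite H1, H2; auto. Qed.
Lemma meq_sym A B : meq D A B -> meq D B A.
Proof. intros H1 i j Hi Hj; rewrite H1; auto. Qed.

Lemma Lind_zero H Ds : meq D (Lind D H Ds mzero) mzero.
Proof.
  unfold Lind.
  apply meq_trans with (madd (mscale (Cneg Ci) (msub mzero mzero)) mzero).
  - apply madd_meq.
    + apply mscale_meq, msub_meq; [apply mmul_zero_r | apply mmul_zero_l].
    + induction Ds; simpl. apply meq_refl.
      apply meq_trans with (madd mzero mzero).
      * apply madd_meq; auto. unfold dissip.
        apply meq_trans with (msub mzero (mscale (RtoC (1/2)) (madd mzero mzero))).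
        -- apply msub_meq. apply meq_trans with (mmul D mzero (adj a)).
           apply mmul_meq; [apply mmul_zero_r | apply meq_refl]. apply mmul_zero_l.
           apply mscale_meq, madd_meq; [apply mmul_zero_r | apply mmul_zero_l].
        -- intros i j _ _; unfold msub, mscale, madd, mzero; apply Ceq; simpl; ring.
      * intros i j _ _; unfold madd, mzero; apply Ceq; simpl; ring.
  - intros i j _ _; unfold msub, mscale, madd, mzero; apply Ceq; simpl; ring.
Qed.

End M.


Lemma cv_const a l : cv_at_infty (fun _ => a) l -> a = l.
Proof.
  intros H. destruct (Req_dec a l) as [E|E]; auto. exfalso.
  assert (Hp : Rabs (a - l) > 0) by (apply Rabs_pos_lt; lra).
  destruct (H _ Hp) as [T HT]. specialize (HT T (Rge_refl T)). lra.
Qed.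

Section G.
Variable D : nat.

Lemma GAS_fixed H Ds rhod rho : GAS D (Lind D H Ds) rhod -> density D rho ->
  meq D (Lind D H Ds rho) mzero -> meq D rho rhod.
Proof.
  intros HG Hd Hst.
  set (L := Lind D H Ds) in *.
  assert (Lp : forall k, meq D (Lpow L (S k) rho) mzero).
  { induction k; simpl. exact Hst.
    apply meq_trans with (L mzero). apply Lind_meq; exact IHk. apply Lind_zero. }
  assert (Ec : forall t N i j, (i < D)%nat -> (j < D)%nat -> expsum D L t rho N i j = rho i j).
  { intros t N i j Hi Hj. unfold expsum.
    rewrite (Csum_unique _ _ 0%nat).
    2: lia.
    2:{ intros k Hk Hne; destruct k; [lia|].
       rewrite (Lp k i j Hi Hj); unfold mzero; apply Ceq; simpl; ring. }
    simpl. apply Ceq; simpl; field. }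
  intros i j Hi Hj.
  destruct (HG rho Hd (fun _ => rho)) with (i := i) (j := j) as [H1 H2]; auto.
  - intros t _ a b Ha Hb. split; intros eps He; exists 0%nat; intros; rewrite Ec by auto;
      unfold R_dist; rewrite Rminus_diag, Rabs_R0; lra.
  - apply cv_const in H1. apply cv_const in H2. apply Ceq; auto.
Qed.

Lemma GAS_ext L1 L2 r : (forall rho, meq D (L1 rho) (L2 rho)) ->
  (forall rho rho', meq D rho rho' -> meq D (L1 rho) (L1 rho')) ->
  GAS D L1 r -> GAS D L2 r.
Proof.
  intros Heq Hm HG rho0 Hd E HE.
  assert (Lq : forall k rho, meq D (Lpow L1 k rho) (Lpow L2 k rho)).
  { induction k; simpl; intros. apply meq_refl.
    apply meq_trans with (L1 (Lpow L2 k rho)); auto. }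
  intros i0 j0 Hi0 Hj0. apply (HG rho0 Hd E); auto. intros t ht i j Hi Hj.
  assert (Es : forall N, expsum D L1 t rho0 N i j = expsum D L2 t rho0 N i j).
  { intros N; unfold expsum; apply Csum_ext; intros k _; rewrite Lq; auto. }
  destruct (HE t ht i j Hi Hj) as [H1 H2].
  split; intros eps He; [destruct (H1 eps He) as [N0 HN] | destruct (H2 eps He) as [N0 HN]];
    exists N0; intros; rewrite Es; auto.
Qed.

Lemma mv_ketbra u x i : mv D (ketbra u) x i = Cmul (u i) (inner D u x).
Proof. unfold mv, ketbra, inner. rewrite <- Csum_mulr. apply Csum_ext; intros; ring. Qed.

Lemma density_ketbra u : inner D u u = Cone -> density D (ketbra u).
Proof.
  intros Hu. split.
  - intros x.
    assert (E : inner D x (mv D (ketbra u) x) = Cmul (Cconj (inner D u x)) (inner D u x)).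
    { unfold inner at 1. rewrite (Csum_ext _ _ (fun i => Cmul (Cconj (x i)) (vscale (inner D u x) u i))).
      fold (inner D x (vscale (inner D u x) u)). rewrite inner_scale, (inner_conj D x u). ring.
      intros; rewrite mv_ketbra; unfold vscale; ring. }
    rewrite E. destruct (inner D u x) as [a b]; simpl. split; nra.
  - unfold trace. rewrite <- Hu. unfold inner, ketbra. apply Csum_ext; intros; ring.
Qed.

Lemma mmul_ketbra_l A u i j : mmul D A (ketbra u) i j = Cmul (mv D A u i) (Cconj (u j)).
Proof. unfold mmul, mv, ketbra. rewrite <- Csum_mull. apply Csum_ext; intros; ring. Qed.

Lemma mmul_ketbra_r A u i j : herm D A -> (j < D)%nat ->
  mmul D (ketbra u) A i j = Cmul (u i) (Cconj (mv D A u j)).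
Proof.
  intros H Hj. unfold mmul, mv, ketbra. rewrite Cconj_sum, <- Csum_mulr. apply Csum_ext; intros k Hk.
  rewrite (H k j) by auto. unfold adj. rewrite Cconj_mul. ring.
Qed.

Lemma herm_AA A : herm D (mmul D (adj A) A).
Proof.
  intros i j Hi Hj. change (mmul D (adj A) A i j = Cconj (mmul D (adj A) A j i)).
  unfold mmul. rewrite Cconj_sum. apply Csum_ext; intros.
  unfold adj. rewrite Cconj_mul, Cconj_conj. ring.
Qed.

Lemma stationary H Ds u c :
  herm D H -> veq D (mv D H u) (vscale c u) -> im c = 0 ->
  (forall Dk, In Dk Ds -> veq D (mv D Dk u) vzero) ->
  meq D (Lind D H Ds (ketbra u)) mzero.
Proof.
  intros HH Hu Hc HDs. unfold Lind.
  apply meq_trans with (madd mzero mzero).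
  2:{ intros i j _ _; unfold madd, mzero; apply Ceq; simpl; ring. }
  apply madd_meq.
  - intros i j Hi Hj. unfold mscale, msub.
    rewrite mmul_ketbra_l, mmul_ketbra_r by auto. rewrite !Hu by auto. unfold vscale, mzero.
    destruct c as [c1 c2]; simpl in Hc; subst. destruct (u i), (u j); apply Ceq; simpl; ring.
  - induction Ds as [|Dk Ds IH]; simpl. apply meq_refl.
    apply meq_trans with (madd mzero mzero).
    2:{ intros i j _ _; unfold madd, mzero; apply Ceq; simpl; ring. }
    apply madd_meq; [|apply IH; intros; apply HDs; simpl; auto].
    assert (HK : veq D (mv D Dk u) vzero) by (apply HDs; simpl; auto).
    assert (HK2 : veq D (mv D (mmul D (adj Dk) Dk) u) vzero).
    { intros i Hi. rewrite mv_mmul. rewrite (mv_veq D (adj Dk) _ vzero HK).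
      unfold mv, vzero. apply Csum_zero; intros; ring. }
    intros i j Hi Hj. unfold dissip, msub, mscale, madd.
    unfold mmul at 1. rewrite (Csum_zero D).
    2:{ intros k Hk. fold (mmul D Dk (ketbra u)). rewrite mmul_ketbra_l, HK by auto.
        unfold vzero; ring. }
    rewrite mmul_ketbra_l, mmul_ketbra_r by (auto; apply herm_AA).
    rewrite !HK2 by auto. unfold vzero, mzero. apply Ceq; simpl; ring.
Qed.

End G.


Definition Cinv (c : Cplx) : Cplx :=
  mkC (re c / (re c * re c + im c * im c)) (- im c / (re c * re c + im c * im c)).
Lemma Cinv_l c : c <> Czero -> Cmul (Cinv c) c = Cone.
Proof.
  intros Hc. assert (re c * re c + im c * im c <> 0).
  { intros E. apply Hc. destruct c as [a b]; simpl in *. apply Ceq; simpl; nra. }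
  destruct c as [a b]; simpl in *. apply Ceq; simpl; field; auto.
Qed.

Lemma inner_self D v : im (inner D v v) = 0 /\ re (inner D v v) >= 0 /\
  ((exists i, (i < D)%nat /\ v i <> Czero) -> re (inner D v v) > 0).
Proof.
  unfold inner. induction D; simpl.
  - split; [|split]; try lra. intros [i [Hi _]]; lia.
  - destruct IHD as [H1 [H2 H3]]. destruct (v D) as [a b] eqn:Ev; simpl.
    split; [nra|split; [nra|]]. intros [i [Hi Hv]].
    destruct (Nat.eq_dec i D) as [->|Hne].
    + assert (a * a + b * b > 0).
      { destruct (Req_dec a 0), (Req_dec b 0); try nra. subst. rewrite Ev in Hv. exfalso; apply Hv; auto. }
      nra.
    + assert (re (Csum D (fun i0 => Cmul (Cconj (v i0)) (v i0))) > 0) by (apply H3; exists i; split; auto; lia).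
      nra.
Qed.

Lemma nonzero_ex D v : ~ veq D v vzero -> exists i, (i < D)%nat /\ v i <> Czero.
Proof.
  intros H. apply NNPP; intros H2. apply H. intros i Hi. apply NNPP; intros H3. apply H2.
  exists i; split; auto.
Qed.

Lemma inner_scale_l D c x y : inner D (vscale c x) y = Cmul (Cconj c) (inner D x y).
Proof. unfold inner, vscale. rewrite <- Csum_mulr. apply Csum_ext; intros. rewrite Cconj_mul; ring. Qed.

Lemma veq_refl D x : veq D x x.
Proof. intros i _; auto. Qed.

Lemma mv_shift D A c x i : (i < D)%nat ->
  mv D (msub A (mscale c mid)) x i = Csub (mv D A x i) (Cmul c (x i)).
Proof.
  intros Hi. unfold mv, msub, mscale.
  rewrite (Csum_ext _ _ (fun k => Cadd (Cmul (A i k) (x k)) (Cmul (Cneg c) (Cmul (mid i k) (x k))))).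
  2:{ intros; ring. }
  rewrite Csum_add, Csum_mulr. rewrite (Csum_unique _ (fun k => Cmul (mid i k) (x k)) i); auto.
  - cbv beta. unfold mid. rewrite Nat.eqb_refl. ring.
  - intros k _ Hk. unfold mid. apply Nat.eqb_neq in Hk. rewrite Nat.eqb_sym, Hk. ring.
Qed.

Lemma mmul_shift_l D A c r i j : (i < D)%nat ->
  mmul D (msub A (mscale c mid)) r i j = Csub (mmul D A r i j) (Cmul c (r i j)).
Proof. intros Hi. apply (mv_shift D A c (fun k => r k j) i Hi). Qed.

Lemma mmul_shift_r D A c r i j : (j < D)%nat ->
  mmul D r (msub A (mscale c mid)) i j = Csub (mmul D r A i j) (Cmul c (r i j)).
Proof.
  intros Hj. unfold mmul, msub, mscale.
  rewrite (Csum_ext _ _ (fun k => Cadd (Cmul (r i k) (A k j)) (Cmul (Cneg c) (Cmul (mid k j) (r i k))))).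
  2:{ intros; ring. }
  rewrite Csum_add, Csum_mulr. rewrite (Csum_unique _ (fun k => Cmul (mid k j) (r i k)) j); auto.
  - cbv beta. unfold mid. rewrite Nat.eqb_refl. ring.
  - intros k _ Hk. unfold mid. apply Nat.eqb_neq in Hk. rewrite Hk. ring.
Qed.

Lemma herm_smid D r : herm D (mscale (RtoC r) mid).
Proof.
  intros i j _ _. unfold mscale, adj, mid. rewrite Nat.eqb_sym.
  destruct (Nat.eqb j i); apply Ceq; simpl; ring.
Qed.

Lemma QL_mid n dims N c : (forall a, (a < n)%nat -> (1 <= dims a)%nat) ->
  QL_on n dims N (mscale c mid).
Proof.
  intros Hd. exists (fun i j => if agreeb n dims N i j then c else Czero). split.
  - intros i j i' j' Hi Hj Hi' Hj' H1 H2.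
    rewrite (agreeb_congr n dims N i i' j H1).
    destruct (agreeb n dims N i' j) eqn:E1, (agreeb n dims N i' j') eqn:E2; auto.
    + apply agreeb_iff in E1. assert (agreeb n dims N i' j' = true); [|congruence].
      apply agreeb_iff. eapply agree_trans; [exact E1| exact H2].
    + apply agreeb_iff in E2. assert (agreeb n dims N i' j = true); [|congruence].
      apply agreeb_iff. eapply agree_trans; [exact E2| apply agree_sym; exact H2].
  - intros i j Hi Hj. split.
    + intros Hc. unfold mscale, mid. destruct (Nat.eqb i j) eqn:E.
      * apply Nat.eqb_eq in E. subst. assert (agreeb n dims N j j = true) as F
          by (apply agreeb_iff, agree_refl). rewrite F. ring.
      * destruct (agreeb n dims N i j) eqn:F; [|ring].
        apply agreeb_iff in F. apply Nat.eqb_neq in E. exfalso; apply E.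
        apply (idx_eq_iff n dims N i j Hi Hj). auto.
    + intros Hc. unfold mscale, mid. destruct (Nat.eqb i j) eqn:E; [|ring].
      apply Nat.eqb_eq in E; subst. exfalso; apply Hc, agree_refl.
Qed.


Theorem proposition3
  (n : nat) (dims : nat -> nat) (Nb : list (nat -> bool))
  (psi : Vec) (Hc : Mat) (Ds : list Mat) (h : R) :
  (forall a, (a < n)%nat -> (1 <= dims a)%nat) ->
  proper_nbhds n Nb ->
  inner (Dtot n dims) psi psi = Cone ->
  ~ DQLS n dims Nb psi ->
  QLHam n dims Nb Hc ->
  (forall Dk, In Dk Ds -> QLop n dims Nb Dk) ->
  (forall Dk, In Dk Ds -> veq (Dtot n dims) (mv (Dtot n dims) Dk psi) vzero) ->
  veq (Dtot n dims) (mv (Dtot n dims) Hc psi) (vscale (RtoC h) psi) ->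
  GAS (Dtot n dims) (Lind (Dtot n dims) Hc Ds) (ketbra psi) ->
  (* H_d is H_c-invariant *)
  (forall x, inspan (Dtot n dims) psi x ->
     inspan (Dtot n dims) psi (mv (Dtot n dims) Hc x)) /\
  (* no nonzero H_c-invariant subspace K of H_0 other than H_d *)
  (~ exists K : Vec -> Prop,
       is_subspace (Dtot n dims) K /\
       (forall x, K x -> inH0 n dims Nb (ketbra psi) x) /\
       (exists x, K x /\ ~ veq (Dtot n dims) x vzero) /\
       ~ (forall x, K x <-> inspan (Dtot n dims) psi x) /\
       (forall x, K x -> K (mv (Dtot n dims) Hc x))) /\
  (* H_c' = H_c - h I *)
  (QLHam n dims Nb (msub Hc (mscale (RtoC h) mid)) /\
   veq (Dtot n dims) (mv (Dtot n dims) (msub Hc (mscale (RtoC h) mid)) psi) vzero /\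
   GAS (Dtot n dims) (Lind (Dtot n dims) (msub Hc (mscale (RtoC h) mid)) Ds) (ketbra psi)).
Proof.
  intros Hd Hprop Hnorm HnD HQL HDsQL HDs0 Heig HGAS.
  set (D := Dtot n dims) in *.
  assert (Hherm : herm D Hc).
  { destruct HQL as [terms [Ht Hm]]. eapply herm_meq; [exact Hm|].
    apply herm_fold. intros T HT; apply Ht; auto. }
  assert (psi_nz : exists i, (i < D)%nat /\ psi i <> Czero).
  { apply nonzero_ex. intros Hz. assert (inner D psi psi = Czero) as E.
    { rewrite (inner_veq D psi psi psi vzero); [apply inner_zero | apply veq_refl | exact Hz]. }
    rewrite Hnorm in E. injection E; intros; lra. }
  split; [|split].
  - intros x [c Hx]. exists (Cmul c (RtoC h)). intros i Hi.
    rewrite (mv_veq D Hc x (vscale c psi) Hx i), mv_scale, Heig by auto. unfold vscale; ring.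
  - intros [K [[Kext [Kz [Kadd Ksc]]] [HK0 [[x0 [Kx0 nx0]] [Hneq Hinv]]]]].
    assert (Dkill : forall x, K x -> forall Dk, In Dk Ds -> veq D (mv D Dk x) vzero).
    { intros x Kx Dk HDk. destruct (HDsQL Dk HDk) as [N [HN HQ]].
      destruct (HK0 x Kx N HN) as [y Hy]. intros i Hi.
      rewrite <- (mv_veq D Dk _ _ Hy i). rewrite <- mv_mmul. unfold mv.
      apply Csum_zero; intros k Hk. unfold D. rewrite ptrace; auto. unfold vzero; ring. }
    assert (Ev : exists v c, K v /\ ~ veq D v vzero /\ veq D (mv D Hc v) (vscale c v) /\
                             ~ inspan D psi v).
    { destruct (classic (K psi)) as [Kp|Kp].
      - assert (exists x, K x /\ ~ inspan D psi x) as [x [Kx nx]].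
        { apply NNPP; intros Hn. apply Hneq. intros x; split.
          - intros Kx. apply NNPP; intros ni. apply Hn. exists x; auto.
          - intros [c Hc']. apply (Kext (vscale c psi)); [intros i Hi; symmetry; auto | apply Ksc; auto]. }
        destruct (MC.eig_exists D Hc (fun w => K w /\ inner D psi w = Czero))
          as [v [c [[Kv Pv] [nv Evc]]]].
        + intros a b Hab [Ka Ia]. split; [eapply Kext; eauto|].
          rewrite <- Ia. symmetry. apply inner_veq; auto using veq_refl.
        + split; auto. apply inner_zero.
        + intros a b [Ka Ia] [Kb Ib]. split; auto. rewrite inner_add, Ia, Ib. ring.
        + intros c a [Ka Ia]. split; auto. rewrite inner_scale, Ia. ring.
        + exists (vadd x (vscale (Cneg (inner D psi x)) psi)). split; [split|].
          * apply Kadd; auto.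
          * rewrite inner_add, inner_scale, Hnorm. ring.
          * intros Hw. apply nx. exists (inner D psi x). intros i Hi.
            specialize (Hw i Hi). unfold vadd, vscale, vzero in *.
            transitivity (Cadd (Cadd (x i) (Cmul (Cneg (inner D psi x)) (psi i)))
                               (Cmul (inner D psi x) (psi i))); [ring|]. rewrite Hw. ring.
        + intros w [Kw Iw]. split; auto. rewrite herm_inner by auto.
          rewrite (inner_veq D w w (mv D Hc psi) (vscale (RtoC h) psi)) by auto using veq_refl.
          rewrite inner_scale, (inner_conj D w psi), Iw. apply Ceq; simpl; ring.
        + exists v, c. split; auto. split; auto. split; auto.
          intros [c' Hc']. apply nv.
          assert (c' = Czero) as ->.
          { rewrite (inner_veq D psi psi v (vscale c' psi)) in Pv by auto using veq_refl.
            rewrite inner_scale, Hnorm in Pv. rewrite <- Pv. ring. }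
          intros i Hi. rewrite Hc' by auto. unfold vscale, vzero. ring.
      - destruct (MC.eig_exists D Hc K) as [v [c [Kv [nv Evc]]]]; auto.
        { exists x0; auto. }
        exists v, c. split; auto. split; auto. split; auto.
        intros [c' Hc']. destruct (classic (c' = Czero)) as [->|Hc0].
        + apply nv. intros i Hi. rewrite Hc' by auto. unfold vscale, vzero. ring.
        + apply Kp. apply (Kext (vscale (Cinv c') v)); [|apply Ksc; auto].
          intros i Hi. unfold vscale at 1. rewrite Hc' by auto. unfold vscale.
          transitivity (Cmul (Cmul (Cinv c') c') (psi i)); [ring|]. rewrite Cinv_l by auto. ring. }
    destruct Ev as [v [c [Kv [nv [Evc niv]]]]].
    destruct (inner_self D v) as [Iim [_ Ipos]].
    specialize (Ipos (nonzero_ex D v nv)).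
    set (r := re (inner D v v)) in *.
    assert (Hcr : im c = 0).
    { pose proof (herm_inner D Hc v v Hherm) as E.
      rewrite (inner_veq D v v (mv D Hc v) (vscale c v)) in E by auto using veq_refl.
      rewrite inner_scale in E. destruct (inner D v v) as [a b] eqn:Eb. simpl in r, Iim.
      subst b. destruct c as [c1 c2]. injection E; simpl; intros. unfold r in *. nra. }
    set (s := / sqrt r).
    set (u := vscale (RtoC s) v).
    assert (Hsr : s * s * r = 1).
    { unfold s. rewrite <- Rinv_mult, sqrt_sqrt by lra. field. lra. }
    assert (Hu : inner D u u = Cone).
    { unfold u. rewrite inner_scale_l, inner_scale. destruct (inner D v v) as [a b] eqn:Eb.
      simpl in r, Iim. subst b. unfold r in Hsr. apply Ceq; simpl; nra. }
    assert (Eu : veq D (mv D Hc u) (vscale c u)).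
    { intros i Hi. unfold u. rewrite mv_scale, Evc by auto. unfold vscale. ring. }
    assert (Ku : forall Dk, In Dk Ds -> veq D (mv D Dk u) vzero).
    { intros Dk HDk i Hi. unfold u. rewrite mv_scale, (Dkill v Kv Dk HDk i Hi). unfold vzero. ring. }
    pose proof (GAS_fixed D Hc Ds (ketbra psi) (ketbra u) HGAS (density_ketbra D u Hu)
                  (stationary D Hc Ds u c Hherm Eu Hcr Ku)) as Hkb.
    apply niv. exists (Cmul (RtoC (sqrt r)) (inner D psi u)). intros i Hi.
    assert (u i = Cmul (psi i) (inner D psi u)) as Eui.
    { transitivity (mv D (ketbra u) u i).
      - rewrite mv_ketbra, Hu. ring.
      - rewrite (mv_meq D (ketbra u) (ketbra psi)) by auto. apply mv_ketbra. }
    assert (v i = Cmul (RtoC (sqrt r)) (u i)) as Evi.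
    { unfold u, vscale. assert (sqrt r * s = 1) as E1.
      { unfold s. field. apply Rgt_not_eq, sqrt_lt_R0; lra. }
      transitivity (Cmul (RtoC (sqrt r * s)) (v i)); [rewrite E1; apply Ceq; simpl; ring|].
      apply Ceq; simpl; ring. }
    rewrite Evi, Eui. unfold vscale. ring.
  - split; [|split].
    + destruct HQL as [terms [Ht Hm]]. destruct Nb as [|N0 Nb'].
      * assert (terms = nil) as ->.
        { destruct terms as [|T terms]; auto. destruct (Ht T (or_introl eq_refl)) as [_ [N [[] _]]]. }
        assert (h = 0) as ->.
        { destruct psi_nz as [i [Hi Hpi]]. specialize (Heig i Hi).
          assert (mv D Hc psi i = Czero) as E.
          { unfold mv. apply Csum_zero. intros k Hk. rewrite Hm by auto. simpl. unfold mzero. ring. }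
          rewrite E in Heig. unfold vscale in Heig. destruct (psi i) as [a b].
          injection Heig; simpl; intros.
          destruct (Req_dec h 0); auto. exfalso; apply Hpi. apply Ceq; simpl; nra. }
        exists nil. split; [intros T []|]. intros i j Hi Hj. unfold msub, mscale.
        rewrite Hm by auto. simpl. unfold mzero. apply Ceq; simpl; ring.
      * exists (mscale (RtoC (- h)) mid :: terms). split.
        -- intros T [<-|HT]; [|apply Ht; auto]. split; [apply herm_smid|].
           exists N0. split; [left; auto|]. apply QL_mid; auto.
        -- intros i j Hi Hj.
           change (msub Hc (mscale (RtoC h) mid) i j =
                   Cadd (mscale (RtoC (- h)) mid i j) (fold_right madd mzero terms i j)).
           unfold msub, mscale. rewrite Hm by auto.
           destruct (mid i j), (fold_right madd mzero terms i j). apply Ceq; simpl; ring.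
    + intros i Hi. rewrite mv_shift, Heig by auto. unfold vscale, vzero. ring.
    + apply (GAS_ext D (Lind D Hc Ds)); auto.
      * intros rho. unfold Lind. apply madd_meq; [|apply meq_refl]. apply mscale_meq.
        intros i j Hi Hj.
        change (Csub (mmul D Hc rho i j) (mmul D rho Hc i j) =
                Csub (mmul D (msub Hc (mscale (RtoC h) mid)) rho i j)
                     (mmul D rho (msub Hc (mscale (RtoC h) mid)) i j)).
        rewrite mmul_shift_l, mmul_shift_r by auto. ring.
      * intros; apply Lind_meq; auto.
Qed.
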